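(* Consider the setting in the context, and let $\mathbf{R}=(R_1,R_2)$ and $\mathbf{R}'=(R_1',R_2')$ be two pairs of payoff matrices. Suppose the modified 4-player game is $\alpha$-strongly monotone (for some $\alpha>0$) for the payoff pair $\mathbf{R}'$ (the strong monotonicity condition does not depend on the payoffs). Let $z^*=(\pi_1^*,\pi_2^*,p_1^*,p_2^* )$ and $z^\dagger=(\pi_1^\dagger,\pi_2^\dagger,p_1^\dagger,p_2^\dagger)$ be Nash equilibria of the modified 4-player game with payoffs $\mathbf{R}$ and $\mathbf{R}'$ respectively. Then $$\|z^*-z^\dagger\|_2\le \frac{2\left(\sqrt{|\mathcal{A}_1|}+\sqrt{|\mathcal{A}_2|}\right)\|\mathbf{R}-\mathbf{R}'\|_\infty}{\alpha},$$ and consequently the corresponding RQEs $\pi^*=(\pi_1^*,\pi_2^* )$ and $\pi^\dagger=(\pi_1^\dagger,\pi_2^\dagger)$ of the original game satisfy $$\|\pi^*-\pi^\dagger\|_2\le \frac{2\left(\sqrt{|\mathcal{A}_1|}+\sqrt{|\mathcal{A}_2|}\right)\|\mathbf{R}-\mathbf{R}'\|_\infty}{\alpha}.$$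
   Context: Two players $i\in\{1,2\}$ have finite action sets $\mathcal{A}_1,\mathcal{A}_2$; $-i$ denotes the other player, $\Delta_n$ the probability simplex in $\mathbb{R}^n$. Payoff matrices $R_1\in\mathbb{R}^{|\mathcal{A}_1|\times|\mathcal{A}_2|}$, $R_2\in\mathbb{R}^{|\mathcal{A}_2|\times|\mathcal{A}_1|}$; $\|\mathbf{R}-\mathbf{R}'\|_\infty$ denotes the largest absolute value of an entry of $R_1-R_1'$ or $R_2-R_2'$. For each $i$ fix $\epsilon_i>0$, a differentiable strictly convex $\nu_i$ (on an open set containing $\Delta_{|\mathcal{A}_i|}$), and a differentiable $D_i:\Delta_{|\mathcal{A}_{-i}|}\times\Delta_{|\mathcal{A}_{-i}|}\to\mathbb{R}$ convex in its first argument. Player $i$ minimizes $f_i(\pi_i,\pi_{-i};R_i)=\sup_{p_i\in\Delta_{|\mathcal{A}_{-i}|}}[-\pi_i^TR_ip_i-D_i(p_i,\pi_{-i})]+\epsilon_i\nu_i(\pi_i)$; an RQE is a pair $(\pi_1^*,\pi_2^* )$ with $f_i(\pi_i^*,\pi_{-i}^*;R_i)\le f_i(\pi_i,\pi_{-i}^*;R_i)$ for all $\pi_i\in\Delta_{|\mathcal{A}_i|}$, $i=1,2$; for a Nash equilibrium $(\pi_1,\pi_2,p_1,p_2)$ of the modified game below, $(\pi_1,\pi_2)$ is its corresponding RQE. The modified 4-player game has joint strategy $z=(\pi_1,\pi_2,p_1,p_2)\in\mathcal{Z}=\Delta_{|\mathcal{A}_1|}\times\Delta_{|\mathcal{A}_2|}\times\Delta_{|\mathcal{A}_2|}\times\Delta_{|\mathcal{A}_1|}$;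 player $\pi_i$ minimizes $J_i(z)=-\pi_i^TR_ip_i-D_i(p_i,\pi_{-i})+\epsilon_i\nu_i(\pi_i)$ over $\pi_i\in\Delta_{|\mathcal{A}_i|}$ and adversary $p_i$ minimizes $\bar J_i(z)=\pi_i^TR_ip_i+D_i(p_i,\pi_{-i})-\epsilon_i\nu_i(\pi_i)$ over $p_i\in\Delta_{|\mathcal{A}_{-i}|}$. Its gradient operator is $F(z;\mathbf{R})=(-R_1p_1+\epsilon_1\nabla\nu_1(\pi_1),\,-R_2p_2+\epsilon_2\nabla\nu_2(\pi_2),\,R_1^T\pi_1+\nabla_{p_1}D_1(p_1,\pi_2),\,R_2^T\pi_2+\nabla_{p_2}D_2(p_2,\pi_1))$. The game is $\alpha$-strongly monotone if $(z-z')^T(F(z;\mathbf{R})-F(z';\mathbf{R}))\ge\alpha\|z-z'\|_2^2$ for all $z,z'\in\mathcal{Z}$; since the payoff terms cancel in this expression, the condition is independent of $\mathbf{R}$. *)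

(* Defs.v *)
From HB Require Import structures.
From mathcomp Require Import all_boot all_order all_algebra.
From mathcomp Require Import all_classical all_reals all_analysis.
Set Implicit Arguments. Unset Strict Implicit. Unset Printing Implicit Defensive.
Import Order.TTheory GRing.Theory Num.Theory.
Import numFieldNormedType.Exports.
Local Open Scope classical_set_scope.
Local Open Scope ring_scope.

Section RQE.
Variable R : realType.

Definition simplex (n : nat) : set 'cV[R]_n :=
  [set v | (forall i, 0 <= v i 0) /\ \sum_i v i 0 = 1].

Definition dotv (n : nat) (u v : 'cV[R]_n) : R := \sum_i u i 0 * v i 0.
Definition sqnorm (n : nat) (v : 'cV[R]_n) : R := dotv v v.

Definition grad (n : nat) (f : 'cV[R]_n -> R) (x : 'cV[R]_n) : 'cV[R]_n :=
  \col_j ('d f x (delta_mx j 0)).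

Definition grad1 (m : nat) (D : 'cV[R]_m -> 'cV[R]_m -> R) (p q : 'cV[R]_m)
  : 'cV[R]_m := grad (fun p' => D p' q) p.

Definition convex_on (n : nat) (A : set 'cV[R]_n) (f : 'cV[R]_n -> R) :=
  forall x y t, A x -> A y -> 0 <= t <= 1 ->
    f (t *: x + (1 - t) *: y) <= t * f x + (1 - t) * f y.
Definition strictly_convex_on (n : nat) (A : set 'cV[R]_n) (f : 'cV[R]_n -> R) :=
  forall x y t, A x -> A y -> x != y -> 0 < t < 1 ->
    f (t *: x + (1 - t) *: y) < t * f x + (1 - t) * f y.

Variables (n1 n2 : nat).

Definition jstrat := ('cV[R]_n1 * 'cV[R]_n2 * 'cV[R]_n2 * 'cV[R]_n1)%type.
Definition pi1 (z : jstrat) : 'cV[R]_n1 := z.1.1.1.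
Definition pi2 (z : jstrat) : 'cV[R]_n2 := z.1.1.2.
Definition pp1 (z : jstrat) : 'cV[R]_n2 := z.1.2.
Definition pp2 (z : jstrat) : 'cV[R]_n1 := z.2.

Definition Zset : set jstrat :=
  [set z | simplex (pi1 z) /\ simplex (pi2 z) /\ simplex (pp1 z) /\ simplex (pp2 z)].

Definition bil (a b : nat) (x : 'cV[R]_a) (M : 'M[R]_(a, b)) (y : 'cV[R]_b) : R :=
  (x^T *m M *m y) 0 0.

Variables (eps1 eps2 : R)
          (nu1 : 'cV[R]_n1 -> R) (nu2 : 'cV[R]_n2 -> R)
          (D1 : 'cV[R]_n2 -> 'cV[R]_n2 -> R) (D2 : 'cV[R]_n1 -> 'cV[R]_n1 -> R).

Definition J1 (R1 : 'M[R]_(n1, n2)) (z : jstrat) : R :=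
  - bil (pi1 z) R1 (pp1 z) - D1 (pp1 z) (pi2 z) + eps1 * nu1 (pi1 z).
Definition J2 (R2 : 'M[R]_(n2, n1)) (z : jstrat) : R :=
  - bil (pi2 z) R2 (pp2 z) - D2 (pp2 z) (pi1 z) + eps2 * nu2 (pi2 z).
Definition Jbar1 (R1 : 'M[R]_(n1, n2)) (z : jstrat) : R :=
  bil (pi1 z) R1 (pp1 z) + D1 (pp1 z) (pi2 z) - eps1 * nu1 (pi1 z).
Definition Jbar2 (R2 : 'M[R]_(n2, n1)) (z : jstrat) : R :=
  bil (pi2 z) R2 (pp2 z) + D2 (pp2 z) (pi1 z) - eps2 * nu2 (pi2 z).

Definition is_NE (R1 : 'M[R]_(n1, n2)) (R2 : 'M[R]_(n2, n1)) (z : jstrat) : Prop :=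
  Zset z /\
  (forall x, simplex x -> J1 R1 z <= J1 R1 (x, pi2 z, pp1 z, pp2 z)) /\
  (forall x, simplex x -> J2 R2 z <= J2 R2 (pi1 z, x, pp1 z, pp2 z)) /\
  (forall x, simplex x -> Jbar1 R1 z <= Jbar1 R1 (pi1 z, pi2 z, x, pp2 z)) /\
  (forall x, simplex x -> Jbar2 R2 z <= Jbar2 R2 (pi1 z, pi2 z, pp1 z, x)).

Definition Fop (R1 : 'M[R]_(n1, n2)) (R2 : 'M[R]_(n2, n1)) (z : jstrat) : jstrat :=
  (- (R1 *m pp1 z) + eps1 *: grad nu1 (pi1 z),
   - (R2 *m pp2 z) + eps2 *: grad nu2 (pi2 z),
   R1^T *m pi1 z + grad1 D1 (pp1 z) (pi2 z),
   R2^T *m pi2 z + grad1 D2 (pp2 z) (pi1 z)).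

Definition jdot (z w : jstrat) : R :=
  dotv (pi1 z) (pi1 w) + dotv (pi2 z) (pi2 w) + dotv (pp1 z) (pp1 w)
  + dotv (pp2 z) (pp2 w).
Definition jsub (z w : jstrat) : jstrat :=
  (pi1 z - pi1 w, pi2 z - pi2 w, pp1 z - pp1 w, pp2 z - pp2 w).
Definition jnorm (z : jstrat) : R := Num.sqrt (jdot z z).

Definition strongly_monotone (alpha : R)
    (R1 : 'M[R]_(n1, n2)) (R2 : 'M[R]_(n2, n1)) : Prop :=
  forall z z', Zset z -> Zset z' ->
    jdot (jsub z z') (jsub (Fop R1 R2 z) (Fop R1 R2 z')) >= alpha * jdot (jsub z z') (jsub z z').

End RQE.

Definition mx_supnorm (R : realType) (a b : nat) (M : 'M[R]_(a, b)) : R :=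
  \big[Num.max/0]_(i < a) \big[Num.max/0]_(j < b) `|M i j|.

Definition pair_dist_inf (R : realType) (n1 n2 : nat)
    (R1 R1' : 'M[R]_(n1, n2)) (R2 R2' : 'M[R]_(n2, n1)) : R :=
  Num.max (mx_supnorm (R1 - R1')) (mx_supnorm (R2 - R2')).

Definition pi_dist (R : realType) (n1 n2 : nat) (z w : jstrat R n1 n2) : R :=
  Num.sqrt (sqnorm (pi1 z - pi1 w) + sqnorm (pi2 z - pi2 w)).

(* Main.v *)
Require Import Defs.
From HB Require Import structures.
From mathcomp Require Import all_boot all_order all_algebra.
From mathcomp Require Import all_classical all_reals all_analysis.
From mathcomp Require Import ring lra.
Set Implicit Arguments. Unset Strict Implicit.
Import Order.TTheory GRing.Theory Num.Theory.
Import numFieldNormedType.Exports.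
Local Open Scope classical_set_scope.
Local Open Scope ring_scope.

Lemma first_order (R : realType) n (h : 'cV[R]_n -> R) x v c :
  differentiable h x ->
  (forall t : R, 0 < t -> t < 1 -> 0 <= c * t + (h (x + t *: v) - h x)) ->
  0 <= c + 'd h x v.
Proof.
move=> dh H.
have dv : derivable h x v := diff_derivable dh.
rewrite -deriveE //.
set g := (fun t : R => t^-1 *: ((h \o shift x) (t *: v) - h x)).
have gc : g @ 0^'+ --> 'D_v h x.
  apply: cvg_dnbhs_at_right; exact: dv.
apply: (@cvgr_to_ge R (0:R)^'+ _ R (fun t => c + g t) _ 0).
  by apply: cvgD => //; exact: cvg_cst.
near=> t.
have t0 : 0 < t by near: t; exact: nbhs_right_gt.
have t1 : t < 1 by near: t; exact: nbhs_right_lt.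
have Ht := H t t0 t1.
rewrite /g /=.
have -> : c + t^-1 *: (h (t *: v + x) - h x) = t^-1 * (c * t + (h (x + t *: v) - h x)).
  by rewrite (addrC _ x) [RHS]mulrDr mulrCA mulVf ?gt_eqF // mulr1.
by apply: mulr_ge0 => //; rewrite invr_ge0 ltW.
Unshelve. all: by end_near.
Qed.

Lemma first_order_k (R : realType) n (h : 'cV[R]_n -> R) x v c k :
  0 < k -> differentiable h x ->
  (forall t : R, 0 < t -> t < 1 -> 0 <= c * t + k * (h (x + t *: v) - h x)) ->
  0 <= c + k * 'd h x v.
Proof.
move=> k0 dh H.
have : 0 <= c / k + 'd h x v.
  apply: first_order dh _ => t t0 t1.
  have -> : c / k * t + (h (x + t *: v) - h x)
          = k^-1 * (c * t + k * (h (x + t *: v) - h x)).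
    by field; rewrite gt_eqF.
  by apply: mulr_ge0; [rewrite invr_ge0 ltW | exact: H].
move=> H2.
have -> : c + k * 'd h x v = k * (c / k + 'd h x v).
  by field; rewrite gt_eqF.
by apply: mulr_ge0 => //; exact: ltW.
Qed.

Section Dot.
Variable R : realType.

Lemma dlin n (h : 'cV[R]_n -> R) x v : 'd h x v = dotv v (grad h x).
Proof.
rewrite /dotv /grad {1}(matrix_sum_delta v) linear_sum; apply: eq_bigr => i _.
by rewrite big_ord1 linearZ mxE.
Qed.

Lemma dotvDl n (u u' w : 'cV[R]_n) : dotv (u + u') w = dotv u w + dotv u' w.
Proof. by rewrite /dotv -big_split; apply: eq_bigr => i _; rewrite mxE mulrDl. Qed.
Lemma dotvDr n (u w w' : 'cV[R]_n) : dotv u (w + w') = dotv u w + dotv u w'.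
Proof. by rewrite /dotv -big_split; apply: eq_bigr => i _; rewrite mxE mulrDr. Qed.
Lemma dotvZl n a (u w : 'cV[R]_n) : dotv (a *: u) w = a * dotv u w.
Proof. by rewrite /dotv mulr_sumr; apply: eq_bigr => i _; rewrite mxE mulrA. Qed.
Lemma dotvZr n a (u w : 'cV[R]_n) : dotv u (a *: w) = a * dotv u w.
Proof. by rewrite /dotv mulr_sumr; apply: eq_bigr => i _; rewrite mxE mulrCA. Qed.
Lemma dotvNl n (u w : 'cV[R]_n) : dotv (- u) w = - dotv u w.
Proof. by rewrite /dotv -sumrN; apply: eq_bigr => i _; rewrite mxE mulNr. Qed.
Lemma dotvNr n (u w : 'cV[R]_n) : dotv u (- w) = - dotv u w.
Proof. by rewrite /dotv -sumrN; apply: eq_bigr => i _; rewrite mxE mulrN. Qed.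
Lemma dotvBl n (u u' w : 'cV[R]_n) : dotv (u - u') w = dotv u w - dotv u' w.
Proof. by rewrite dotvDl dotvNl. Qed.
Lemma dotvBr n (u w w' : 'cV[R]_n) : dotv u (w - w') = dotv u w - dotv u w'.
Proof. by rewrite dotvDr dotvNr. Qed.

Lemma bilE a b (x : 'cV[R]_a) (M : 'M[R]_(a, b)) y : bil x M y = dotv x (M *m y).
Proof. by rewrite /bil -mulmxA mxE /dotv; apply: eq_bigr => i _; rewrite mxE. Qed.

Lemma bilE' a b (x : 'cV[R]_a) (M : 'M[R]_(a, b)) y : bil x M y = dotv y (M^T *m x).
Proof.
rewrite /bil /dotv mxE; apply: eq_bigr => j _; rewrite mulrC; congr (_ * _).
by rewrite !mxE; apply: eq_bigr => i _; rewrite !mxE mulrC.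
Qed.

Lemma simplex_comb n (x y : 'cV[R]_n) t : simplex x -> simplex y -> 0 < t -> t < 1 ->
  simplex (x + t *: (y - x)).
Proof.
move=> [x0 x1] [y0 y1] t0 t1; split.
  move=> i; rewrite !mxE.
  have := x0 i; have := y0 i; nra.
rewrite (eq_bigr (fun i => x i 0 + t * (y i 0 - x i 0))); last by move=> i _; rewrite !mxE.
by rewrite big_split /= -mulr_sumr sumrB x1 y1 subrr mulr0 addr0.
Qed.

Lemma block n (f h : 'cV[R]_n -> R) k x w y : 0 < k -> differentiable h x ->
  simplex x -> simplex y -> (forall x', simplex x' -> f x <= f x') ->
  (forall x', f x' - f x = dotv (x' - x) w + k * (h x' - h x)) ->
  0 <= dotv (y - x) (w + k *: grad h x).
Proof.
move=> k0 dh sx sy fmin fE.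
rewrite dotvDr dotvZr -dlin.
apply: first_order_k => // t t0 t1.
have := fmin _ (simplex_comb sx sy t0 t1).
rewrite -subr_ge0 fE (addrC x) addrK dotvZl.
by rewrite (mulrC t).
Qed.

End Dot.

Lemma NE_VI (R : realType) n1 n2 eps1 eps2 (nu1 : 'cV[R]_n1 -> R) (nu2 : 'cV[R]_n2 -> R)
  (D1 : 'cV[R]_n2 -> 'cV[R]_n2 -> R) (D2 : 'cV[R]_n1 -> 'cV[R]_n1 -> R) R1 R2
  (z : jstrat R n1 n2) :
  0 < eps1 -> 0 < eps2 ->
  (forall x, simplex x -> differentiable nu1 x) ->
  (forall x, simplex x -> differentiable nu2 x) ->
  (forall p q, simplex p -> simplex q -> differentiable (fun p' => D1 p' q) p) ->
  (forall p q, simplex p -> simplex q -> differentiable (fun p' => D2 p' q) p) ->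
  is_NE eps1 eps2 nu1 nu2 D1 D2 R1 R2 z -> forall w, Zset w ->
  0 <= jdot (jsub w z) (Fop eps1 eps2 nu1 nu2 D1 D2 R1 R2 z).
Proof.
case: z => [[[a b] c] d].
move=> e1 e2 dn1 dn2 dD1 dD2 [[s1 [s2 [s3 s4]]] [h1 [h2 [h3 h4]]]] w [w1 [w2 [w3 w4]]].
move: s1 s2 s3 s4 h1 h2 h3 h4; rewrite /pi1 /pi2 /pp1 /pp2 /= => s1 s2 s3 s4 h1 h2 h3 h4.
rewrite /jdot /jsub /Fop /pi1 /pi2 /pp1 /pp2 /=.
apply: addr_ge0; [apply: addr_ge0; [apply: addr_ge0|]|].
- apply: (@block _ _ (fun x => J1 eps1 nu1 D1 R1 (x, b, c, d)) nu1 eps1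
            a _ (w.1.1.1) e1 (dn1 _ s1) s1 w1 h1).
  by move=> x'; rewrite /J1 /pi1 /pi2 /pp1 /pp2 /= !bilE dotvNr dotvBl; ring.
- apply: (@block _ _ (fun x => J2 eps2 nu2 D2 R2 (a, x, c, d)) nu2 eps2
            b _ (w.1.1.2) e2 (dn2 _ s2) s2 w2 h2).
  by move=> x'; rewrite /J2 /pi1 /pi2 /pp1 /pp2 /= !bilE dotvNr dotvBl; ring.
- have := (@block _ _ (fun x => Jbar1 eps1 nu1 D1 R1 (a, b, x, d)) (fun p => D1 p b) 1
            c (R1^T *m a) (w.1.2) ltr01 (dD1 _ _ s3 s2) s3 w3 h3).
  rewrite scale1r; apply.
  by move=> x'; rewrite /Jbar1 /pi1 /pi2 /pp1 /pp2 /= !bilE' dotvBl; ring.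
- have := (@block _ _ (fun x => Jbar2 eps2 nu2 D2 R2 (a, b, c, x)) (fun p => D2 p a) 1
            d (R2^T *m b) (w.2) ltr01 (dD2 _ _ s4 s1) s4 w4 h4).
  rewrite scale1r; apply.
  by move=> x'; rewrite /Jbar2 /pi1 /pi2 /pp1 /pp2 /= !bilE' dotvBl; ring.
Qed.

Section Bounds.
Variable R : realType.

Lemma young n a (u w : 'cV[R]_n) :
  2 * a * dotv u w <= a ^+ 2 * sqnorm u + sqnorm w.
Proof.
rewrite /sqnorm /dotv !mulr_sumr -big_split /=; apply: ler_sum => i _.
have := sqr_ge0 (a * u i 0 - w i 0); nra.
Qed.

Lemma sqnorm_ge0 n (u : 'cV[R]_n) : 0 <= sqnorm u.
Proof. by apply: sumr_ge0 => i _; exact: sqr_ge0. Qed.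

Lemma bigmax_seq (I : eqType) (F : I -> R) s x :
  x \in s -> F x <= \big[Num.max/0]_(k <- s) F k.
Proof.
elim: s => // a s IH; rewrite inE big_cons => /orP [/eqP ->|/IH H].
  by rewrite le_max lexx.
by rewrite le_max H orbT.
Qed.

Lemma le_bigmax0 n (F : 'I_n -> R) i : F i <= \big[Num.max/0]_(k < n) F k.
Proof. exact: (bigmax_seq F (mem_index_enum i)). Qed.

Lemma bigmax0_ge0 n (F : 'I_n -> R) : (forall k, 0 <= F k) ->
  0 <= \big[Num.max/0]_(k < n) F k.
Proof. by move=> H; apply: (big_ind (fun x => 0 <= x)) => // x y hx hy; rewrite le_max hx. Qed.

Lemma entry_le a b (M : 'M[R]_(a, b)) i j : `|M i j| <= mx_supnorm M.
Proof.
apply: le_trans (le_bigmax0 (fun j => `|M i j|) j) _.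
exact: (le_bigmax0 (fun i => \big[Num.max/0]_(j < b) `|M i j|) i).
Qed.

Lemma supnorm_ge0 a b (M : 'M[R]_(a, b)) : 0 <= mx_supnorm M.
Proof. by apply: bigmax0_ge0 => i; apply: bigmax0_ge0 => j. Qed.

Lemma sqnorm_mul a b (M : 'M[R]_(a, b)) p δ : simplex p ->
  (forall i j, `|M i j| <= δ) -> sqnorm (M *m p) <= a%:R * (δ * δ).
Proof.
move=> [p0 p1] hM.
have e : forall i, `|(M *m p) i 0| <= δ.
  move=> i; rewrite mxE.
  apply: le_trans (ler_norm_sum _ _ _) _.
  apply: le_trans (_ : \sum_j δ * p j 0 <= δ).
    apply: ler_sum => j _; rewrite normrM (ger0_norm (p0 j)).
    by apply: ler_wpM2r => //.
  by rewrite -mulr_sumr p1 mulr1.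
rewrite /sqnorm /dotv.
apply: le_trans (_ : \sum_(i < a) δ * δ <= _).
  apply: ler_sum => i _.
  by have := e i; rewrite ler_norml => /andP[h1 h2]; nra.
by rewrite sumr_const card_ord mulr_natl.
Qed.

End Bounds.

Section JBounds.
Variables (R : realType) (n1 n2 : nat).
Implicit Types (u w X : jstrat R n1 n2).

Lemma jdot_subl u w X : jdot (jsub u w) X = jdot u X - jdot w X.
Proof. by rewrite /jdot /jsub /pi1 /pi2 /pp1 /pp2 /= !dotvBl; ring. Qed.

Lemma jdot_subr u w X : jdot X (jsub u w) = jdot X u - jdot X w.
Proof. by rewrite /jdot /jsub /pi1 /pi2 /pp1 /pp2 /= !dotvBr; ring. Qed.

Lemma young_j a u X : 2 * a * jdot u X <= a ^+ 2 * jdot u u + jdot X X.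
Proof.
rewrite /jdot.
have := young a (pi1 u) (pi1 X); have := young a (pi2 u) (pi2 X).
have := young a (pp1 u) (pp1 X); have := young a (pp2 u) (pp2 X).
rewrite /sqnorm; nra.
Qed.

End JBounds.

Unset Implicit Arguments. Set Strict Implicit.

Theorem theorem1 (R : realType) (n1 n2 : nat)
  (eps1 eps2 : R) (nu1 : 'cV[R]_n1 -> R) (nu2 : 'cV[R]_n2 -> R)
  (D1 : 'cV[R]_n2 -> 'cV[R]_n2 -> R) (D2 : 'cV[R]_n1 -> 'cV[R]_n1 -> R)
  (heps1 : 0 < eps1) (heps2 : 0 < eps2)
  (hnu1 : exists U : set 'cV[R]_n1, open U /\ simplex (n:=n1) `<=` U /\
            (forall x, U x -> differentiable nu1 x))
  (hnu2 : exists U : set 'cV[R]_n2, open U /\ simplex (n:=n2) `<=` U /\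
            (forall x, U x -> differentiable nu2 x))
  (hnu1c : strictly_convex_on (simplex (n:=n1)) nu1)
  (hnu2c : strictly_convex_on (simplex (n:=n2)) nu2)
  (hD1 : exists U : set ('cV[R]_n2 * 'cV[R]_n2),
            open U /\ (forall p q, simplex p -> simplex q -> U (p, q)) /\
            (forall pq, U pq -> differentiable (fun w => D1 w.1 w.2) pq))
  (hD2 : exists U : set ('cV[R]_n1 * 'cV[R]_n1),
            open U /\ (forall p q, simplex p -> simplex q -> U (p, q)) /\
            (forall pq, U pq -> differentiable (fun w => D2 w.1 w.2) pq))
  (hD1c : forall q, simplex q -> convex_on (simplex (n:=n2)) (fun p => D1 p q))
  (hD2c : forall q, simplex q -> convex_on (simplex (n:=n1)) (fun p => D2 p q))
  (R1 R1' : 'M[R]_(n1, n2)) (R2 R2' : 'M[R]_(n2, n1)) (alpha : R)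
  (halpha : 0 < alpha)
  (hmon : strongly_monotone eps1 eps2 nu1 nu2 D1 D2 alpha R1' R2')
  (zs zd : jstrat R n1 n2)
  (hzs : is_NE eps1 eps2 nu1 nu2 D1 D2 R1 R2 zs)
  (hzd : is_NE eps1 eps2 nu1 nu2 D1 D2 R1' R2' zd) :
  let bound := 2 * (Num.sqrt (n1%:R) + Num.sqrt (n2%:R))
               * pair_dist_inf R1 R1' R2 R2' / alpha in
  jnorm (jsub zs zd) <= bound /\ pi_dist zs zd <= bound.
Proof.
move=> bound.
have dn1 : forall x, simplex x -> differentiable nu1 x.
  by case: hnu1 => U [_ [sU dU]] x sx; apply: dU; apply: sU.
have dn2 : forall x, simplex x -> differentiable nu2 x.
  by case: hnu2 => U [_ [sU dU]] x sx; apply: dU; apply: sU.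
have dD1 : forall p q, simplex p -> simplex q -> differentiable (fun p' => D1 p' q) p.
  case: hD1 => U [_ [sU dU]] p q sp sq.
  have dpair : differentiable (fun p' => (p', q)) p by apply: differentiable_pair.
  exact: (differentiable_comp dpair (dU _ (sU _ _ sp sq))).
have dD2 : forall p q, simplex p -> simplex q -> differentiable (fun p' => D2 p' q) p.
  case: hD2 => U [_ [sU dU]] p q sp sq.
  have dpair : differentiable (fun p' => (p', q)) p by apply: differentiable_pair.
  exact: (differentiable_comp dpair (dU _ (sU _ _ sp sq))).
have Zs := hzs.1; have Zd := hzd.1.
set d := jsub zs zd.
set A := Fop eps1 eps2 nu1 nu2 D1 D2 R1' R2' zs.
set B := Fop eps1 eps2 nu1 nu2 D1 D2 R1' R2' zd.
set C := Fop eps1 eps2 nu1 nu2 D1 D2 R1 R2 zs.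
have m := hmon zs zd Zs Zd.
have v1 := NE_VI heps1 heps2 dn1 dn2 dD1 dD2 hzd Zs.
have v2 := NE_VI heps1 heps2 dn1 dn2 dD1 dD2 hzs Zd.
rewrite -/d -/A -/B in m v1; rewrite -/C in v2.
have key : alpha * jdot d d <= jdot d (jsub A C).
  have e1 : jdot d (jsub A B) = jdot d A - jdot d B := jdot_subr _ _ _.
  have e2 : jdot (jsub zd zs) C = jdot zd C - jdot zs C := jdot_subl _ _ _.
  have e3 : jdot d (jsub A C) = jdot d A - jdot d C := jdot_subr _ _ _.
  have e4 : jdot d C = jdot zs C - jdot zd C := jdot_subl _ _ _.
  clearbody d A B C.
  rewrite e3 e4; rewrite e1 in m; rewrite e2 in v2.
  lra.
set δ := pair_dist_inf R1 R1' R2 R2'.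
have δ0 : 0 <= δ by rewrite /δ /pair_dist_inf le_max supnorm_ge0.
have b1 : forall i j, `|(R1 - R1') i j| <= δ.
  by move=> i j; apply: le_trans (entry_le _ i j) _; rewrite /δ /pair_dist_inf le_max lexx.
have b2 : forall i j, `|(R2 - R2') i j| <= δ.
  by move=> i j; apply: le_trans (entry_le _ i j) _; rewrite /δ /pair_dist_inf le_max lexx orbT.
have b3 : forall i j, `|((R1' - R1)^T) i j| <= δ.
  by move=> i j; have := b1 j i; rewrite !mxE distrC.
have b4 : forall i j, `|((R2' - R2)^T) i j| <= δ.
  by move=> i j; have := b2 j i; rewrite !mxE distrC.
have E : jdot (jsub A C) (jsub A C) <= 2 * (n1%:R + n2%:R) * (δ * δ).
  case: Zs => s1 [s2 [s3 s4]].
  have e1 : pi1 (jsub A C) = (R1 - R1') *m pp1 zs.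
    by rewrite /A /C /Fop /jsub /pi1 /= mulmxBl opprD opprK addrACA subrr addr0 addrC.
  have e2 : pi2 (jsub A C) = (R2 - R2') *m pp2 zs.
    by rewrite /A /C /Fop /jsub /pi2 /= mulmxBl opprD opprK addrACA subrr addr0 addrC.
  have e3 : pp1 (jsub A C) = (R1' - R1)^T *m pi1 zs.
    by rewrite /A /C /Fop /jsub /pp1 /= linearB /= mulmxBl opprD addrACA subrr addr0.
  have e4 : pp2 (jsub A C) = (R2' - R2)^T *m pi2 zs.
    by rewrite /A /C /Fop /jsub /pp2 /= linearB /= mulmxBl opprD addrACA subrr addr0.
  have J : jdot (jsub A C) (jsub A C) = sqnorm (pi1 (jsub A C)) + sqnorm (pi2 (jsub A C))
     + sqnorm (pp1 (jsub A C)) + sqnorm (pp2 (jsub A C)) by [].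
  rewrite J e1 e2 e3 e4.
  have := sqnorm_mul s3 b1; have := sqnorm_mul s4 b2.
  have := sqnorm_mul s1 b3; have := sqnorm_mul s2 b4.
  move=> h4 h3 h2 h1.
  apply: le_trans (lerD (lerD (lerD h1 h2) h3) h4) _.
  have -> : 2 * (n1%:R + n2%:R) * (δ * δ)
    = n1%:R * (δ * δ) + n2%:R * (δ * δ) + n2%:R * (δ * δ) + n1%:R * (δ * δ) :> R by ring.
  exact: lexx.
have Y := young_j alpha d (jsub A C).
clearbody A B C.
move: (jdot d (jsub A C)) (jdot (jsub A C) (jsub A C)) key Y E => X E' key Y E.
have N20 : 0 <= jdot d d.
  by rewrite /d /jdot; apply: addr_ge0; [apply: addr_ge0; [apply: addr_ge0|]|]; exact: sqnorm_ge0.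
have Jn : jnorm d = Num.sqrt (jdot d d) by [].
have Pd : pi_dist zs zd <= jnorm d.
  rewrite Jn /pi_dist ler_sqrt //.
  rewrite /d /jdot /jsub /pi1 /pi2 /pp1 /pp2 /= /sqnorm.
  have := sqnorm_ge0 (zs.1.2 - zd.1.2); have := sqnorm_ge0 (zs.2 - zd.2).
  rewrite /sqnorm; lra.
rewrite Jn in Pd *.
move: (jdot d d) key Y N20 Pd => N2 key Y N20 Pd.
have k2 : 2 * alpha * (alpha * N2) <= 2 * alpha * X.
  by rewrite ler_pM2l // mulr_gt0.
have aN : alpha ^+ 2 * N2 <= E' by lra.
set s1 := Num.sqrt (n1%:R : R); set s2 := Num.sqrt (n2%:R : R).
have s10 : 0 <= s1 by exact: sqrtr_ge0.
have s20 : 0 <= s2 by exact: sqrtr_ge0.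
have s1sq : s1 ^+ 2 = n1%:R by rewrite sqr_sqrtr // ler0n.
have s2sq : s2 ^+ 2 = n2%:R by rewrite sqr_sqrtr // ler0n.
have ab : alpha * bound = 2 * (s1 + s2) * δ.
  by rewrite /bound -/s1 -/s2 -/δ; field; rewrite gt_eqF.
have bnd0 : 0 <= bound.
  rewrite /bound -/s1 -/s2 -/δ; apply: divr_ge0; last exact: ltW.
  by apply: mulr_ge0 => //; apply: mulr_ge0 => //; apply: addr_ge0.
have sq : 2 * (n1%:R + n2%:R) * (δ * δ) <= (alpha * bound) ^+ 2.
  rewrite ab.
  have -> : (2 * (s1 + s2) * δ) ^+ 2 = 4 * (s1 ^+ 2 + s2 ^+ 2) * (δ * δ) + 8 * (s1 * s2 * (δ * δ)) by ring.
  rewrite s1sq s2sq.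
  have P : 0 <= s1 * s2 * (δ * δ) by apply: mulr_ge0; apply: mulr_ge0.
  have Q : 0 <= (n1%:R + n2%:R) * (δ * δ) :> R by apply: mulr_ge0; [apply: addr_ge0; exact: ler0n | apply: mulr_ge0].
  lra.
have N2b : N2 <= bound ^+ 2.
  have a2 : 0 < alpha ^+ 2 by apply: exprn_gt0.
  rewrite -(ler_pM2l a2) -exprMn.
  by apply: le_trans aN _; apply: le_trans E _.
have J : Num.sqrt N2 <= bound.
  by rewrite -(ger0_norm bnd0) -sqrtr_sqr ler_sqrt // sqr_ge0.
split => //.
exact: le_trans J.
Qed.
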